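(* Let $x$ be a Bertrand D-curve and $x_1$ a Bertrand partner D-curve of $x$. Then: (i) if $x$ is a geodesic curve, the geodesic curvature of $x_1$ is $k_{g_1} = \lambda\tau_g^2(\cos\theta - \lambda\tau_g\sin\theta)\left(\dfrac{ds}{ds_1}\right)^3$; (ii) if $x$ is a principal line, then $k_{g_1} = k_g(1+\lambda k_g)^2\cos\theta\left(\dfrac{ds}{ds_1}\right)^3$.
   Context: For a unit-speed curve $x(s)$ on an oriented surface $S\subset\mathbb{E}^3$, the Darboux frame is $\{T,g,n\}$ ($T$ unit tangent, $n$ unit surface normal along the curve, $g=n\times T$), with $\dot T = k_g g + k_n n$, $\dot g = -k_g T + \tau_g n$, $\dot n = -k_n T - \tau_g g$; $k_g,k_n,\tau_g$ are the geodesic curvature, normal curvature and geodesic torsion. For $x_1(s_1)$ on an oriented surface $S_1$ the analogous objects carry subscript $1$. $x$ is a Bertrand D-curve with Bertrand partner D-curve $x_1$ if there is a correspondence of points such that at corresponding points $g$ coincides with $g_1$; then $x(s)=x_1(s_1)+\lambda g_1(s_1)$ with $\lambda$ a nonzero constant, and $s$ is a function of $s_1$. $\theta$ is the angle between $T$ and $T_1$, oriented so that $T_1=\cos\theta\,T+\sin\theta\,n$, $n_1=-\sin\theta\,T+\cos\theta\,n$. Geodesic means $k_g=0$; principal line means $\tau_g=0$. *)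

(* Defs.v *)
From Stdlib Require Import Reals.
From Coquelicot Require Import Coquelicot.
Open Scope R_scope.

Record vec3 := V3 { vx : R; vy : R; vz : R }.

Definition vadd (u v : vec3) : vec3 := V3 (vx u + vx v) (vy u + vy v) (vz u + vz v).
Definition vscale (a : R) (u : vec3) : vec3 := V3 (a * vx u) (a * vy u) (a * vz u).
Definition dot (u v : vec3) : R := vx u * vx v + vy u * vy v + vz u * vz v.
Definition cross (u v : vec3) : vec3 :=
  V3 (vy u * vz v - vz u * vy v) (vz u * vx v - vx u * vz v) (vx u * vy v - vy u * vx v).

Definition vderiv (f : R -> vec3) (s : R) (d : vec3) : Prop :=
  is_derive (fun t => vx (f t)) s (vx d) /\
  is_derive (fun t => vy (f t)) s (vy d) /\
  is_derive (fun t => vz (f t)) s (vz d).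

(* x : I -> E^3 is a unit-speed curve (parameter s ranging over the open set I)
   lying on an oriented surface, with Darboux frame {T, g, n}
   (T unit tangent, n unit surface normal along the curve, g = n x T)
   and geodesic curvature kg, normal curvature kn, geodesic torsion tg:
     x' = T,  T' = kg g + kn n,  g' = -kg T + tg n,  n' = -kn T - tg g. *)
Definition darboux_curve (I : R -> Prop) (x T g n : R -> vec3) (kg kn tg : R -> R) : Prop :=
  open I /\
  forall s, I s ->
    vderiv x s (T s) /\
    dot (T s) (T s) = 1 /\ dot (n s) (n s) = 1 /\ dot (T s) (n s) = 0 /\
    g s = cross (n s) (T s) /\
    vderiv T s (vadd (vscale (kg s) (g s)) (vscale (kn s) (n s))) /\
    vderiv g s (vadd (vscale (- kg s) (T s)) (vscale (tg s) (n s))) /\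
    vderiv n s (vadd (vscale (- kn s) (T s)) (vscale (- tg s) (g s))).

(* x (with Darboux data on I) is a Bertrand D-curve with Bertrand partner
   D-curve x1 (with Darboux data on J): the point correspondence is
   s = phi s1 (phi differentiable), g coincides with g1 at corresponding
   points, and x(s) = x1(s1) + lam g1(s1) with lam a nonzero constant. *)
Definition bertrand_D_pair (I J : R -> Prop) (x g x1 g1 : R -> vec3)
    (phi : R -> R) (lam : R) : Prop :=
  lam <> 0 /\
  forall s1, J s1 ->
    I (phi s1) /\ ex_derive phi s1 /\
    g (phi s1) = g1 s1 /\
    x (phi s1) = vadd (x1 s1) (vscale lam (g1 s1)).

(* theta (as a function of s1) is the oriented angle from T to T1:
   T1 = cos theta T + sin theta n,  n1 = - sin theta T + cos theta n. *)
Definition angle_between (J : R -> Prop) (T n T1 n1 : R -> vec3) (phi theta : R -> R) : Prop :=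
  forall s1, J s1 ->
    T1 s1 = vadd (vscale (cos (theta s1)) (T (phi s1))) (vscale (sin (theta s1)) (n (phi s1))) /\
    n1 s1 = vadd (vscale (- sin (theta s1)) (T (phi s1))) (vscale (cos (theta s1)) (n (phi s1))).

(* Main.v *)
Require Import Defs.
From Stdlib Require Import Reals Lra.
From Coquelicot Require Import Coquelicot.
Open Scope R_scope.

Lemma key (X Y : R -> R) (J : R -> Prop) (phi : R -> R) s1 dX dY :
  open J -> J s1 -> (forall t, J t -> X (phi t) = Y t) ->
  is_derive X (phi s1) dX -> ex_derive phi s1 -> is_derive Y s1 dY ->
  dX * Derive phi s1 = dY.
Proof.
  intros HJ Js HXY HX Hp HY.
  pose proof (is_derive_comp X phi s1 dX _ HX (Derive_correct _ _ Hp)) as H.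
  assert (H2 : is_derive Y s1 (scal (Derive phi s1) dX)).
  { apply (is_derive_ext_loc (fun t => X (phi t))); [|exact H].
    apply (filter_imp J); [intros; apply HXY; auto| apply HJ; auto]. }
  pose proof (is_derive_unique _ _ _ H2) as E1.
  pose proof (is_derive_unique _ _ _ HY) as E2.
  rewrite E2 in E1. rewrite E1. unfold scal; simpl; unfold mult; simpl. ring.
Qed.
Lemma alg (Tx Ty Tz nx ny nz c s p k1 t1 kg tg lam : R) :
  Tx*Tx+Ty*Ty+Tz*Tz = 1 -> nx*nx+ny*ny+nz*nz = 1 -> Tx*nx+Ty*ny+Tz*nz = 0 ->
  Tx * p = (c*Tx+s*nx) + lam*(-k1*(c*Tx+s*nx) + t1*(-s*Tx+c*nx)) ->
  Ty * p = (c*Ty+s*ny) + lam*(-k1*(c*Ty+s*ny) + t1*(-s*Ty+c*ny)) ->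
  Tz * p = (c*Tz+s*nz) + lam*(-k1*(c*Tz+s*nz) + t1*(-s*Tz+c*nz)) ->
  (-kg*Tx + tg*nx) * p = -k1*(c*Tx+s*nx) + t1*(-s*Tx+c*nx) ->
  (-kg*Ty + tg*ny) * p = -k1*(c*Ty+s*ny) + t1*(-s*Ty+c*ny) ->
  (-kg*Tz + tg*nz) * p = -k1*(c*Tz+s*nz) + t1*(-s*Tz+c*nz) ->
  p = (1-lam*k1)*c - lam*t1*s /\ 0 = (1-lam*k1)*s + lam*t1*c /\
  -kg*p = -k1*c - t1*s /\ tg*p = -k1*s + t1*c.
Proof.
  intros HT Hn HTn Ax Ay Az Bx By Bz.
  set (a := (1-lam*k1)*c - lam*t1*s). set (b := (1-lam*k1)*s + lam*t1*c).
  assert (Ax' : Tx*p = a*Tx + b*nx) by (rewrite Ax; unfold a, b; ring).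
  assert (Ay' : Ty*p = a*Ty + b*ny) by (rewrite Ay; unfold a, b; ring).
  assert (Az' : Tz*p = a*Tz + b*nz) by (rewrite Az; unfold a, b; ring).
  set (a' := -k1*c - t1*s). set (b' := -k1*s + t1*c).
  assert (Bx' : (-kg*Tx + tg*nx)*p = a'*Tx + b'*nx) by (rewrite Bx; unfold a', b'; ring).
  assert (By' : (-kg*Ty + tg*ny)*p = a'*Ty + b'*ny) by (rewrite By; unfold a', b'; ring).
  assert (Bz' : (-kg*Tz + tg*nz)*p = a'*Tz + b'*nz) by (rewrite Bz; unfold a', b'; ring).
  clearbody a b a' b'.
  repeat split.
  - transitivity (Tx*(Tx*p)+Ty*(Ty*p)+Tz*(Tz*p)).
    + transitivity (p*(Tx*Tx+Ty*Ty+Tz*Tz)); [rewrite HT; ring| ring].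
    + rewrite Ax', Ay', Az'.
      transitivity (a*(Tx*Tx+Ty*Ty+Tz*Tz) + b*(Tx*nx+Ty*ny+Tz*nz)); [ring|].
      rewrite HT, HTn; ring.
  - transitivity (nx*(Tx*p)+ny*(Ty*p)+nz*(Tz*p)).
    + transitivity (p*(Tx*nx+Ty*ny+Tz*nz)); [rewrite HTn; ring| ring].
    + rewrite Ax', Ay', Az'.
      transitivity (a*(Tx*nx+Ty*ny+Tz*nz) + b*(nx*nx+ny*ny+nz*nz)); [ring|].
      rewrite Hn, HTn; ring.
  - transitivity (Tx*((-kg*Tx + tg*nx)*p)+Ty*((-kg*Ty + tg*ny)*p)+Tz*((-kg*Tz + tg*nz)*p)).
    + transitivity (p*(-kg*(Tx*Tx+Ty*Ty+Tz*Tz) + tg*(Tx*nx+Ty*ny+Tz*nz))); [rewrite HT, HTn; ring| ring].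
    + rewrite Bx', By', Bz'.
      transitivity (a'*(Tx*Tx+Ty*Ty+Tz*Tz) + b'*(Tx*nx+Ty*ny+Tz*nz)); [ring|].
      rewrite HT, HTn; ring.
  - transitivity (nx*((-kg*Tx + tg*nx)*p)+ny*((-kg*Ty + tg*ny)*p)+nz*((-kg*Tz + tg*nz)*p)).
    + transitivity (p*(-kg*(Tx*nx+Ty*ny+Tz*nz) + tg*(nx*nx+ny*ny+nz*nz))); [rewrite Hn, HTn; ring| ring].
    + rewrite Bx', By', Bz'.
      transitivity (a'*(Tx*nx+Ty*ny+Tz*nz) + b'*(nx*nx+ny*ny+nz*nz)); [ring|].
      rewrite Hn, HTn; ring.
Qed.

Lemma fin (c s p k1 t1 kg tg lam : R) :
  c*c + s*s = 1 ->
  p = (1-lam*k1)*c - lam*t1*s -> 0 = (1-lam*k1)*s + lam*t1*c ->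
  -kg*p = -k1*c - t1*s -> tg*p = -k1*s + t1*c ->
  (kg = 0 -> k1 = lam * tg ^ 2 * (c - lam * tg * s) * p ^ 3) /\
  (tg = 0 -> k1 = kg * (1 + lam * kg) ^ 2 * c * p ^ 3).
Proof.
  intros Hcs H1 H2 H3 H4.
  assert (P : p = c - lam*kg*p).
  { rewrite H1 at 1. assert (kg*p = k1*c + t1*s) by lra. replace (c - lam*kg*p) with (c - lam*(kg*p)) by ring. rewrite H. ring. }
  assert (S : 0 = s + lam*tg*p).
  { rewrite H2. replace (s + lam*tg*p) with (s + lam*(tg*p)) by ring. rewrite H4. ring. }
  assert (K : k1 = c*kg*p - s*tg*p).
  { replace (c*kg*p - s*tg*p) with (c*(kg*p) - s*(tg*p)) by ring. assert (kg*p = k1*c + t1*s) by lra. rewrite H, H4.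
    transitivity (k1*(c*c+s*s)); [rewrite Hcs; ring | ring]. }
  split; intros Z; [subst kg | subst tg].
  - assert (Pc : p = c) by lra.
    assert (Ss : s = - lam*tg*c) by (rewrite <- Pc; lra).
    rewrite K, Pc, Ss. rewrite Ss in Hcs.
    transitivity (lam*tg^2*c*c * 1); [ring|]. rewrite <- Hcs. ring.
  - assert (Ss : s = 0) by lra. rewrite Ss in Hcs.
    assert (Pc : p*(1+lam*kg) = c) by lra.
    rewrite K, Ss.
    transitivity (kg*c*p*((p * (1+lam*kg))^2)); [| ring].
    rewrite Pc. transitivity (kg*c*p*1); [ring|]. rewrite <- Hcs. ring.
Qed.

Lemma der_lin (f h : R -> R) x a b lam :
  is_derive f x a -> is_derive h x b -> is_derive (fun t => f t + lam * h t) x (a + lam * b).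
Proof. intros Hf Hh. apply (is_derive_plus f (fun t => lam * h t)); auto. apply is_derive_scal; auto. Qed.

Theorem corollary3
  (I J : R -> Prop)
  (x T g n : R -> vec3) (kg kn tg : R -> R)
  (x1 T1 g1 n1 : R -> vec3) (kg1 kn1 tg1 : R -> R)
  (phi : R -> R) (lam : R) (theta : R -> R) :
  darboux_curve I x T g n kg kn tg ->
  darboux_curve J x1 T1 g1 n1 kg1 kn1 tg1 ->
  bertrand_D_pair I J x g x1 g1 phi lam ->
  angle_between J T n T1 n1 phi theta ->
  ((forall s, I s -> kg s = 0) ->
     forall s1, J s1 ->
       kg1 s1 = lam * (tg (phi s1)) ^ 2
                * (cos (theta s1) - lam * tg (phi s1) * sin (theta s1))
                * (Derive phi s1) ^ 3)
  /\
  ((forall s, I s -> tg s = 0) ->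
     forall s1, J s1 ->
       kg1 s1 = kg (phi s1) * (1 + lam * kg (phi s1)) ^ 2 * cos (theta s1)
                * (Derive phi s1) ^ 3).
Proof.
  intros [_ DI] [HJ DJ] [_ BP] AB.
  assert (M : forall s1, J s1 ->
    (kg (phi s1) = 0 -> kg1 s1 = lam * (tg (phi s1)) ^ 2
                * (cos (theta s1) - lam * tg (phi s1) * sin (theta s1))
                * (Derive phi s1) ^ 3) /\
    (tg (phi s1) = 0 -> kg1 s1 = kg (phi s1) * (1 + lam * kg (phi s1)) ^ 2 * cos (theta s1)
                * (Derive phi s1) ^ 3)).
  { intros s1 Js.
    destruct (BP s1 Js) as [Ip [Hd [Hg Hx]]].
    destruct (DI (phi s1) Ip) as [[x1d [x2d x3d]] [HTT [Hnn [HTn [_ [_ [[g1d [g2d g3d]] _]]]]]]].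
    destruct (DJ s1 Js) as [[y1d [y2d y3d]] [_ [_ [_ [_ [_ [[h1d [h2d h3d]] _]]]]]]].
    destruct (AB s1 Js) as [ET1 En1].
    pose proof (sin2_cos2 (theta s1)) as SC. unfold Rsqr in SC.
    assert (XE : forall t, J t -> x (phi t) = vadd (x1 t) (vscale lam (g1 t)))
      by (intros t Jt; apply (BP t Jt)).
    assert (GE : forall t, J t -> g (phi t) = g1 t) by (intros t Jt; apply (BP t Jt)).
    pose proof (key (fun t => vx (x t)) (fun t => vx (x1 t) + lam * vx (g1 t)) J phi s1 _ _
      HJ Js (fun t Jt => f_equal vx (XE t Jt)) x1d Hd (der_lin _ _ _ _ _ lam y1d h1d)) as A1.
    pose proof (key (fun t => vy (x t)) (fun t => vy (x1 t) + lam * vy (g1 t)) J phi s1 _ _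
      HJ Js (fun t Jt => f_equal vy (XE t Jt)) x2d Hd (der_lin _ _ _ _ _ lam y2d h2d)) as A2.
    pose proof (key (fun t => vz (x t)) (fun t => vz (x1 t) + lam * vz (g1 t)) J phi s1 _ _
      HJ Js (fun t Jt => f_equal vz (XE t Jt)) x3d Hd (der_lin _ _ _ _ _ lam y3d h3d)) as A3.
    pose proof (key (fun t => vx (g t)) (fun t => vx (g1 t)) J phi s1 _ _
      HJ Js (fun t Jt => f_equal vx (GE t Jt)) g1d Hd h1d) as B1.
    pose proof (key (fun t => vy (g t)) (fun t => vy (g1 t)) J phi s1 _ _
      HJ Js (fun t Jt => f_equal vy (GE t Jt)) g2d Hd h2d) as B2.
    pose proof (key (fun t => vz (g t)) (fun t => vz (g1 t)) J phi s1 _ _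
      HJ Js (fun t Jt => f_equal vz (GE t Jt)) g3d Hd h3d) as B3.
    rewrite ET1, En1 in A1, A2, A3, B1, B2, B3.
    unfold dot in HTT, Hnn, HTn.
    cbn in A1, A2, A3, B1, B2, B3.
    set (c := cos (theta s1)) in *. set (s := sin (theta s1)) in *.
    set (p := Derive phi s1) in *.
    destruct (alg (vx (T (phi s1))) (vy (T (phi s1))) (vz (T (phi s1)))
                  (vx (n (phi s1))) (vy (n (phi s1))) (vz (n (phi s1)))
                  c s p (kg1 s1) (tg1 s1) (kg (phi s1)) (tg (phi s1)) lam)
      as [E1 [E2 [E3 E4]]]; auto;
      try (rewrite A1 || rewrite A2 || rewrite A3 || rewrite B1 || rewrite B2 || rewrite B3; ring).
    apply (fin c s p (kg1 s1) (tg1 s1)); auto; lra. }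
  split; intros H s1 Js; apply (M s1 Js); apply H; apply (BP s1 Js).
Qed.
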